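(* Let $Q$ be a non-degenerate convex quadrangle of perimeter $2$. Then its dual quadrangle $Q^\circ$ is also convex.
   Context: Identify $\mathbb{R}^2$ with $\mathbb{C}$. A quadrangle $Q=ABCD$ is an ordered 4-tuple of points $A,B,C,D\in\mathbb{C}$: $A$ is the first vertex and the order $A\to B\to C\to D\to A$ is the direction of traversal. Its edge vectors are $z_1=B-A$, $z_2=C-B$, $z_3=D-C$, $z_4=A-D$, so $z_1+z_2+z_3+z_4=0$; its perimeter is $|z_1|+|z_2|+|z_3|+|z_4|$. $Q$ is non-degenerate if each pair of consecutive edge vectors $(z_1,z_2),(z_2,z_3),(z_3,z_4),(z_4,z_1)$ consists of nonzero, non-collinear vectors. A non-degenerate quadrangle is self-intersecting if one of the pairs of opposite edges (segments $AB$ and $CD$, or $BC$ and $DA$) intersect; it is convex if it is not self-intersecting and all its interior angles are less than $\pi$; it is non-convex if it is neither self-intersecting nor convex. Associated plane: for a non-degenerate $Q$ of perimeter $2$, choose $u_1,\dots,u_4\in\mathbb{C}$ with $u_k^2=z_k$, where $u_1$ is an arbitrary square root of $z_1$ and for $k=1,2,3$ the sign of $u_{k+1}$ is chosen so that $\operatorname{Im}(\overline{u_k}u_{k+1})$ has the same sign as $\operatorname{Im}(\overline{z_k}z_{k+1})$. Write $u_k=a_k+i b_k$ and $\bar a=(a_1,a_2,a_3,a_4)$, $\bar b=(b_1,b_2,b_3,b_4)$; these are orthonormal in $\mathbb{R}^4$. Let $\Pi=\operatorname{span}(\bar a,\bar b)$ and $\Pi^\perp$ its orthogonal complement. Dual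 quadrangle: choose an orthonormal basis $(\bar c,\bar d)$ of $\Pi^\perp$, put $w_k=(c_k+i d_k)^2$; then $\sum_k w_k=0$ and $\sum_k|w_k|=2$. The dual quadrangle $Q^\circ=KLMN$ is the quadrangle with $L-K=w_1$, $M-L=w_2$, $N-M=w_3$, $K-N=w_4$. It is determined up to rotation, reflection and translation. *)

(* Defs.v *)
(* classical reals. C is identified with R^2 = R * R. *)
From Stdlib Require Import Reals.
Open Scope R_scope.

Definition pt : Type := (R * R)%type.

Definition padd (p q : pt) : pt := (fst p + fst q, snd p + snd q).
Definition psub (p q : pt) : pt := (fst p - fst q, snd p - snd q).
Definition pscale (s : R) (p : pt) : pt := (s * fst p, s * snd p).
Definition pzero : pt := (0, 0).
Definition pnorm (p : pt) : R := sqrt (fst p ^ 2 + snd p ^ 2).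

(* cross p q = Im (conj p * q) *)
Definition cross (p q : pt) : R := fst p * snd q - snd p * fst q.

Definition csq (u : pt) : pt := (fst u ^ 2 - snd u ^ 2, 2 * fst u * snd u).

Definition z1 (A B C D : pt) : pt := psub B A.
Definition z2 (A B C D : pt) : pt := psub C B.
Definition z3 (A B C D : pt) : pt := psub D C.
Definition z4 (A B C D : pt) : pt := psub A D.

Definition perimeter (A B C D : pt) : R :=
  pnorm (z1 A B C D) + pnorm (z2 A B C D) + pnorm (z3 A B C D) + pnorm (z4 A B C D).

Definition good_pair (p q : pt) : Prop := p <> pzero /\ q <> pzero /\ cross p q <> 0.

Definition nondegenerate (A B C D : pt) : Prop :=
  good_pair (z1 A B C D) (z2 A B C D) /\ good_pair (z2 A B C D) (z3 A B C D) /\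
  good_pair (z3 A B C D) (z4 A B C D) /\ good_pair (z4 A B C D) (z1 A B C D).

Definition segments_intersect (P Q R' S : pt) : Prop :=
  exists s t : R, 0 <= s <= 1 /\ 0 <= t <= 1 /\
    padd P (pscale s (psub Q P)) = padd R' (pscale t (psub S R')).

Definition self_intersecting (A B C D : pt) : Prop :=
  nondegenerate A B C D /\
  (segments_intersect A B C D \/ segments_intersect B C D A).

(* signed area (shoelace); positive iff the traversal is counterclockwise *)
Definition signed_area (A B C D : pt) : R :=
  (cross A B + cross B C + cross C D + cross D A) / 2.

(* For a simple (non-self-intersecting) quadrangle the interior lies to the
   left of the traversal if signed_area > 0 and to the right if < 0; the
   interior angle at the vertex between edges z_k, z_(k+1) is < pi iff the
   turn from z_k to z_(k+1) is in the direction of the orientation. *)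
Definition interior_angles_lt_pi (A B C D : pt) : Prop :=
  let S := signed_area A B C D in
  cross (z1 A B C D) (z2 A B C D) * S > 0 /\
  cross (z2 A B C D) (z3 A B C D) * S > 0 /\
  cross (z3 A B C D) (z4 A B C D) * S > 0 /\
  cross (z4 A B C D) (z1 A B C D) * S > 0.

Definition convex (A B C D : pt) : Prop :=
  nondegenerate A B C D /\ ~ self_intersecting A B C D /\
  interior_angles_lt_pi A B C D.

(* Admissible choice of square roots u_k of the edge vectors z_k:
   u_k^2 = z_k, u_1 arbitrary, and for k = 1,2,3
   Im(conj u_k u_(k+1)) has the same sign as Im(conj z_k z_(k+1)). *)
Definition same_sign (x y : R) : Prop := (x > 0 /\ y > 0) \/ (x < 0 /\ y < 0) \/ (x = 0 /\ y = 0).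

Definition sqrt_choice (A B C D u1 u2 u3 u4 : pt) : Prop :=
  csq u1 = z1 A B C D /\ csq u2 = z2 A B C D /\
  csq u3 = z3 A B C D /\ csq u4 = z4 A B C D /\
  same_sign (cross u1 u2) (cross (z1 A B C D) (z2 A B C D)) /\
  same_sign (cross u2 u3) (cross (z2 A B C D) (z3 A B C D)) /\
  same_sign (cross u3 u4) (cross (z3 A B C D) (z4 A B C D)).

(* With u_k = a_k + i b_k, a = (a_k), b = (b_k); with v_k = (c_k, d_k),
   c = (c_k), d = (d_k).  perp_basis says (c, d) is an orthonormal basis of
   the orthogonal complement of span(a, b) in R^4 (orthonormal + orthogonal to
   a and b; since a, b are orthonormal this complement is 2-dimensional). *)
Definition dot4 (x1 x2 x3 x4 y1 y2 y3 y4 : R) : R := x1*y1 + x2*y2 + x3*y3 + x4*y4.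

Definition perp_basis (u1 u2 u3 u4 v1 v2 v3 v4 : pt) : Prop :=
  let a1 := fst u1 in let a2 := fst u2 in let a3 := fst u3 in let a4 := fst u4 in
  let b1 := snd u1 in let b2 := snd u2 in let b3 := snd u3 in let b4 := snd u4 in
  let c1 := fst v1 in let c2 := fst v2 in let c3 := fst v3 in let c4 := fst v4 in
  let d1 := snd v1 in let d2 := snd v2 in let d3 := snd v3 in let d4 := snd v4 in
  dot4 c1 c2 c3 c4 c1 c2 c3 c4 = 1 /\
  dot4 d1 d2 d3 d4 d1 d2 d3 d4 = 1 /\
  dot4 c1 c2 c3 c4 d1 d2 d3 d4 = 0 /\
  dot4 c1 c2 c3 c4 a1 a2 a3 a4 = 0 /\
  dot4 c1 c2 c3 c4 b1 b2 b3 b4 = 0 /\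
  dot4 d1 d2 d3 d4 a1 a2 a3 a4 = 0 /\
  dot4 d1 d2 d3 d4 b1 b2 b3 b4 = 0.

(* KLMN is a dual quadrangle of ABCD: it has edge vectors w_k = (c_k + i d_k)^2
   for some admissible choice of u_k and some orthonormal basis (c,d) of the
   complement. *)
Definition dual_edges (K L M N v1 v2 v3 v4 : pt) : Prop :=
  psub L K = csq v1 /\ psub M L = csq v2 /\ psub N M = csq v3 /\ psub K N = csq v4.

(* Main.v *)
Require Import Defs.
From Stdlib Require Import Reals Lra Psatz.
Open Scope R_scope.
Definition det3 a b c d e f g h i := a*(e*i - f*h) - b*(d*i - f*g) + c*(d*h - e*g).
Definition det4 m11 m12 m13 m14 m21 m22 m23 m24 m31 m32 m33 m34 m41 m42 m43 m44 :=
  m11 * det3 m22 m23 m24 m32 m33 m34 m42 m43 m44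
 - m12 * det3 m21 m23 m24 m31 m33 m34 m41 m43 m44
 + m13 * det3 m21 m22 m24 m31 m32 m34 m41 m42 m44
 - m14 * det3 m21 m22 m23 m31 m32 m33 m41 m42 m43.
Lemma CB a1 a2 a3 a4 b1 b2 b3 b4 c1 c2 c3 c4 e1 e2 e3 e4
  n1 n2 n3 n4 p1 p2 p3 p4 q1 q2 q3 q4 r1 r2 r3 r4 :
  det4 (dot4 a1 a2 a3 a4 n1 n2 n3 n4) (dot4 a1 a2 a3 a4 p1 p2 p3 p4) (dot4 a1 a2 a3 a4 q1 q2 q3 q4) (dot4 a1 a2 a3 a4 r1 r2 r3 r4)
       (dot4 b1 b2 b3 b4 n1 n2 n3 n4) (dot4 b1 b2 b3 b4 p1 p2 p3 p4) (dot4 b1 b2 b3 b4 q1 q2 q3 q4) (dot4 b1 b2 b3 b4 r1 r2 r3 r4)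
       (dot4 c1 c2 c3 c4 n1 n2 n3 n4) (dot4 c1 c2 c3 c4 p1 p2 p3 p4) (dot4 c1 c2 c3 c4 q1 q2 q3 q4) (dot4 c1 c2 c3 c4 r1 r2 r3 r4)
       (dot4 e1 e2 e3 e4 n1 n2 n3 n4) (dot4 e1 e2 e3 e4 p1 p2 p3 p4) (dot4 e1 e2 e3 e4 q1 q2 q3 q4) (dot4 e1 e2 e3 e4 r1 r2 r3 r4)
  = det4 a1 a2 a3 a4 b1 b2 b3 b4 c1 c2 c3 c4 e1 e2 e3 e4 *
    det4 n1 n2 n3 n4 p1 p2 p3 p4 q1 q2 q3 q4 r1 r2 r3 r4.
Proof. unfold det4, det3, dot4. ring. Qed.

Lemma CBg a1 a2 a3 a4 b1 b2 b3 b4 c1 c2 c3 c4 e1 e2 e3 e4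
  n1 n2 n3 n4 p1 p2 p3 p4 q1 q2 q3 q4 r1 r2 r3 r4
  g11 g12 g13 g14 g21 g22 g23 g24 g31 g32 g33 g34 g41 g42 g43 g44 :
  g11 = dot4 a1 a2 a3 a4 n1 n2 n3 n4 -> g12 = dot4 a1 a2 a3 a4 p1 p2 p3 p4 ->
  g13 = dot4 a1 a2 a3 a4 q1 q2 q3 q4 -> g14 = dot4 a1 a2 a3 a4 r1 r2 r3 r4 ->
  g21 = dot4 b1 b2 b3 b4 n1 n2 n3 n4 -> g22 = dot4 b1 b2 b3 b4 p1 p2 p3 p4 ->
  g23 = dot4 b1 b2 b3 b4 q1 q2 q3 q4 -> g24 = dot4 b1 b2 b3 b4 r1 r2 r3 r4 ->
  g31 = dot4 c1 c2 c3 c4 n1 n2 n3 n4 -> g32 = dot4 c1 c2 c3 c4 p1 p2 p3 p4 ->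
  g33 = dot4 c1 c2 c3 c4 q1 q2 q3 q4 -> g34 = dot4 c1 c2 c3 c4 r1 r2 r3 r4 ->
  g41 = dot4 e1 e2 e3 e4 n1 n2 n3 n4 -> g42 = dot4 e1 e2 e3 e4 p1 p2 p3 p4 ->
  g43 = dot4 e1 e2 e3 e4 q1 q2 q3 q4 -> g44 = dot4 e1 e2 e3 e4 r1 r2 r3 r4 ->
  det4 g11 g12 g13 g14 g21 g22 g23 g24 g31 g32 g33 g34 g41 g42 g43 g44
  = det4 a1 a2 a3 a4 b1 b2 b3 b4 c1 c2 c3 c4 e1 e2 e3 e4 *
    det4 n1 n2 n3 n4 p1 p2 p3 p4 q1 q2 q3 q4 r1 r2 r3 r4.
Proof. intros; subst; apply CB. Qed.

Ltac dsolve := solve [ symmetry; assumption | assumption | unfold dot4 in *; lra ].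

Lemma orth_zero a1 a2 a3 a4 b1 b2 b3 b4 c1 c2 c3 c4 e1 e2 e3 e4 p1 p2 p3 p4 :
  det4 a1 a2 a3 a4 b1 b2 b3 b4 c1 c2 c3 c4 e1 e2 e3 e4 <> 0 ->
  dot4 a1 a2 a3 a4 p1 p2 p3 p4 = 0 -> dot4 b1 b2 b3 b4 p1 p2 p3 p4 = 0 ->
  dot4 c1 c2 c3 c4 p1 p2 p3 p4 = 0 -> dot4 e1 e2 e3 e4 p1 p2 p3 p4 = 0 ->
  p1 = 0 /\ p2 = 0 /\ p3 = 0 /\ p4 = 0.
Proof.
  intros Hd Ha Hb Hc He.
  assert (G1 := CBg a1 a2 a3 a4 b1 b2 b3 b4 c1 c2 c3 c4 e1 e2 e3 e4
     p1 p2 p3 p4 0 1 0 0 0 0 1 0 0 0 0 1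
     0 a2 a3 a4 0 b2 b3 b4 0 c2 c3 c4 0 e2 e3 e4).
  assert (G2 := CBg a1 a2 a3 a4 b1 b2 b3 b4 c1 c2 c3 c4 e1 e2 e3 e4
     1 0 0 0 p1 p2 p3 p4 0 0 1 0 0 0 0 1
     a1 0 a3 a4 b1 0 b3 b4 c1 0 c3 c4 e1 0 e3 e4).
  assert (G3 := CBg a1 a2 a3 a4 b1 b2 b3 b4 c1 c2 c3 c4 e1 e2 e3 e4
     1 0 0 0 0 1 0 0 p1 p2 p3 p4 0 0 0 1
     a1 a2 0 a4 b1 b2 0 b4 c1 c2 0 c4 e1 e2 0 e4).
  assert (G4 := CBg a1 a2 a3 a4 b1 b2 b3 b4 c1 c2 c3 c4 e1 e2 e3 e4
     1 0 0 0 0 1 0 0 0 0 1 0 p1 p2 p3 p4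
     a1 a2 a3 0 b1 b2 b3 0 c1 c2 c3 0 e1 e2 e3 0).
  specialize (G1 ltac:(dsolve) ltac:(dsolve) ltac:(dsolve) ltac:(dsolve) ltac:(dsolve) ltac:(dsolve) ltac:(dsolve) ltac:(dsolve)
     ltac:(dsolve) ltac:(dsolve) ltac:(dsolve) ltac:(dsolve) ltac:(dsolve) ltac:(dsolve) ltac:(dsolve) ltac:(dsolve)).
  specialize (G2 ltac:(dsolve) ltac:(dsolve) ltac:(dsolve) ltac:(dsolve) ltac:(dsolve) ltac:(dsolve) ltac:(dsolve) ltac:(dsolve)
     ltac:(dsolve) ltac:(dsolve) ltac:(dsolve) ltac:(dsolve) ltac:(dsolve) ltac:(dsolve) ltac:(dsolve) ltac:(dsolve)).
  specialize (G3 ltac:(dsolve) ltac:(dsolve) ltac:(dsolve) ltac:(dsolve) ltac:(dsolve) ltac:(dsolve) ltac:(dsolve) ltac:(dsolve)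
     ltac:(dsolve) ltac:(dsolve) ltac:(dsolve) ltac:(dsolve) ltac:(dsolve) ltac:(dsolve) ltac:(dsolve) ltac:(dsolve)).
  specialize (G4 ltac:(dsolve) ltac:(dsolve) ltac:(dsolve) ltac:(dsolve) ltac:(dsolve) ltac:(dsolve) ltac:(dsolve) ltac:(dsolve)
     ltac:(dsolve) ltac:(dsolve) ltac:(dsolve) ltac:(dsolve) ltac:(dsolve) ltac:(dsolve) ltac:(dsolve) ltac:(dsolve)).
  set (E := det4 a1 a2 a3 a4 b1 b2 b3 b4 c1 c2 c3 c4 e1 e2 e3 e4) in *.
  unfold det4 at 1 2 in G1; unfold det4 at 1 2 in G2; unfold det4 at 1 2 in G3; unfold det4 at 1 2 in G4;
  unfold det3 in G1, G2, G3, G4.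
  ring_simplify in G1. ring_simplify in G2. ring_simplify in G3. ring_simplify in G4.
  repeat split.
  - apply (Rmult_eq_reg_l E); [lra|assumption].
  - apply (Rmult_eq_reg_l E); [lra|assumption].
  - apply (Rmult_eq_reg_l E); [lra|assumption].
  - apply (Rmult_eq_reg_l E); [lra|assumption].
Qed.

Lemma pdot r1 r2 r3 r4 e1 e2 e3 e4 a1 a2 a3 a4 b1 b2 b3 b4 c1 c2 c3 c4 d1 d2 d3 d4 x y z w :
  dot4 r1 r2 r3 r4 (e1 - x*a1 - y*b1 - z*c1 - w*d1) (e2 - x*a2 - y*b2 - z*c2 - w*d2)
     (e3 - x*a3 - y*b3 - z*c3 - w*d3) (e4 - x*a4 - y*b4 - z*c4 - w*d4)
  = dot4 r1 r2 r3 r4 e1 e2 e3 e4 - x * dot4 r1 r2 r3 r4 a1 a2 a3 a4 - y * dot4 r1 r2 r3 r4 b1 b2 b3 b4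
    - z * dot4 r1 r2 r3 r4 c1 c2 c3 c4 - w * dot4 r1 r2 r3 r4 d1 d2 d3 d4.
Proof. unfold dot4; ring. Qed.

Lemma core a1 a2 a3 a4 b1 b2 b3 b4 c1 c2 c3 c4 d1 d2 d3 d4 :
  dot4 a1 a2 a3 a4 a1 a2 a3 a4 = 1 -> dot4 b1 b2 b3 b4 b1 b2 b3 b4 = 1 ->
  dot4 a1 a2 a3 a4 b1 b2 b3 b4 = 0 ->
  dot4 c1 c2 c3 c4 c1 c2 c3 c4 = 1 -> dot4 d1 d2 d3 d4 d1 d2 d3 d4 = 1 ->
  dot4 c1 c2 c3 c4 d1 d2 d3 d4 = 0 ->
  dot4 c1 c2 c3 c4 a1 a2 a3 a4 = 0 -> dot4 c1 c2 c3 c4 b1 b2 b3 b4 = 0 ->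
  dot4 d1 d2 d3 d4 a1 a2 a3 a4 = 0 -> dot4 d1 d2 d3 d4 b1 b2 b3 b4 = 0 ->
  exists E, E * E = 1 /\
   a1*a2 + b1*b2 + c1*c2 + d1*d2 = 0 /\ a2*a3 + b2*b3 + c2*c3 + d2*d3 = 0 /\
   a3*a4 + b3*b4 + c3*c4 + d3*d4 = 0 /\ a4*a1 + b4*b1 + c4*c1 + d4*d1 = 0 /\
   a3*b4 - b3*a4 = E * (c1*d2 - d1*c2) /\
   a1*b4 - b1*a4 = E * (c2*d3 - d2*c3) /\
   a1*b2 - b1*a2 = E * (c3*d4 - d3*c4) /\
   a2*b3 - b2*a3 = E * (c1*d4 - d1*c4).
Proof.
  intros Haa Hbb Hab Hcc Hdd Hcd Hca Hcb Hda Hdb.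
  exists (det4 a1 a2 a3 a4 b1 b2 b3 b4 c1 c2 c3 c4 d1 d2 d3 d4).
  set (E := det4 a1 a2 a3 a4 b1 b2 b3 b4 c1 c2 c3 c4 d1 d2 d3 d4).
  assert (HE : E * E = 1).
  { assert (G := CBg a1 a2 a3 a4 b1 b2 b3 b4 c1 c2 c3 c4 d1 d2 d3 d4
       a1 a2 a3 a4 b1 b2 b3 b4 c1 c2 c3 c4 d1 d2 d3 d4
       1 0 0 0 0 1 0 0 0 0 1 0 0 0 0 1).
    specialize (G ltac:(dsolve) ltac:(dsolve) ltac:(dsolve) ltac:(dsolve) ltac:(dsolve) ltac:(dsolve) ltac:(dsolve) ltac:(dsolve)
     ltac:(dsolve) ltac:(dsolve) ltac:(dsolve) ltac:(dsolve) ltac:(dsolve) ltac:(dsolve) ltac:(dsolve) ltac:(dsolve)).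
    fold E in G. rewrite <- G. unfold det4, det3. ring. }
  assert (HE0 : E <> 0) by (intro h; rewrite h in HE; lra).
  assert (R1 := orth_zero a1 a2 a3 a4 b1 b2 b3 b4 c1 c2 c3 c4 d1 d2 d3 d4
    (1 - a1*a1 - b1*b1 - c1*c1 - d1*d1) (0 - a1*a2 - b1*b2 - c1*c2 - d1*d2)
    (0 - a1*a3 - b1*b3 - c1*c3 - d1*d3) (0 - a1*a4 - b1*b4 - c1*c4 - d1*d4) HE0).
  assert (R3 := orth_zero a1 a2 a3 a4 b1 b2 b3 b4 c1 c2 c3 c4 d1 d2 d3 d4
    (0 - a3*a1 - b3*b1 - c3*c1 - d3*d1) (0 - a3*a2 - b3*b2 - c3*c2 - d3*d2)
    (1 - a3*a3 - b3*b3 - c3*c3 - d3*d3) (0 - a3*a4 - b3*b4 - c3*c4 - d3*d4) HE0).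
  assert (Hac : dot4 a1 a2 a3 a4 c1 c2 c3 c4 = 0) by dsolve.
  assert (Had : dot4 a1 a2 a3 a4 d1 d2 d3 d4 = 0) by dsolve.
  assert (Hbc : dot4 b1 b2 b3 b4 c1 c2 c3 c4 = 0) by dsolve.
  assert (Hbd : dot4 b1 b2 b3 b4 d1 d2 d3 d4 = 0) by dsolve.
  assert (Hba : dot4 b1 b2 b3 b4 a1 a2 a3 a4 = 0) by dsolve.
  assert (Hdc : dot4 d1 d2 d3 d4 c1 c2 c3 c4 = 0) by dsolve.
  Ltac pd H := rewrite pdot, ?H; unfold dot4; ring.
  destruct (R1 ltac:(rewrite pdot, Haa, Hab, Hac, Had; unfold dot4; ring)
                ltac:(rewrite pdot, Hba, Hbb, Hbc, Hbd; unfold dot4; ring)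
                ltac:(rewrite pdot, Hca, Hcb, Hcc, Hcd; unfold dot4; ring)
                ltac:(rewrite pdot, Hda, Hdb, Hdc, Hdd; unfold dot4; ring)) as (_ & P2 & _ & P4).
  destruct (R3 ltac:(rewrite pdot, Haa, Hab, Hac, Had; unfold dot4; ring)
                ltac:(rewrite pdot, Hba, Hbb, Hbc, Hbd; unfold dot4; ring)
                ltac:(rewrite pdot, Hca, Hcb, Hcc, Hcd; unfold dot4; ring)
                ltac:(rewrite pdot, Hda, Hdb, Hdc, Hdd; unfold dot4; ring)) as (Q1 & Q2 & _ & Q4).
  Ltac cb a1 a2 a3 a4 b1 b2 b3 b4 c1 c2 c3 c4 d1 d2 d3 d4 n1 n2 n3 n4 p1 p2 p3 p4 ai aj bi bj ci cj di dj :=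
    let G := fresh in
    assert (G := CBg a1 a2 a3 a4 b1 b2 b3 b4 c1 c2 c3 c4 d1 d2 d3 d4
       n1 n2 n3 n4 p1 p2 p3 p4 c1 c2 c3 c4 d1 d2 d3 d4
       ai aj 0 0 bi bj 0 0 ci cj 1 0 di dj 0 1);
    specialize (G ltac:(dsolve) ltac:(dsolve) ltac:(dsolve) ltac:(dsolve) ltac:(dsolve) ltac:(dsolve) ltac:(dsolve) ltac:(dsolve)
     ltac:(dsolve) ltac:(dsolve) ltac:(dsolve) ltac:(dsolve) ltac:(dsolve) ltac:(dsolve) ltac:(dsolve) ltac:(dsolve));
    unfold det4 at 1 3 in G; unfold det3 in G; ring_simplify in G.
  cb a1 a2 a3 a4 b1 b2 b3 b4 c1 c2 c3 c4 d1 d2 d3 d4 0 0 1 0 0 0 0 1 a3 a4 b3 b4 c3 c4 d3 d4.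
  cb a1 a2 a3 a4 b1 b2 b3 b4 c1 c2 c3 c4 d1 d2 d3 d4 1 0 0 0 0 0 0 1 a1 a4 b1 b4 c1 c4 d1 d4.
  cb a1 a2 a3 a4 b1 b2 b3 b4 c1 c2 c3 c4 d1 d2 d3 d4 1 0 0 0 0 1 0 0 a1 a2 b1 b2 c1 c2 d1 d2.
  cb a1 a2 a3 a4 b1 b2 b3 b4 c1 c2 c3 c4 d1 d2 d3 d4 0 1 0 0 0 0 1 0 a2 a3 b2 b3 c2 c3 d2 d3.
  fold E in H, H0, H1, H2.
  repeat split; try assumption; try lra.
Qed.

Lemma gp p q T : cross p q * T > 0 -> good_pair p q.
Proof.
  destruct p as [p1 p2], q as [q1 q2]; unfold good_pair, cross, pzero; simpl; intros H.
  split; [|split].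
  - intro h; injection h; intros; subst; lra.
  - intro h; injection h; intros; subst; lra.
  - intro h; rewrite h in H; lra.
Qed.

Lemma sgn_mul x y T : x * T > 0 -> y * T > 0 -> x * y > 0.
Proof.
  intros Hx Hy. destruct (Rlt_le_dec 0 T).
  - assert (x > 0) by nra. assert (y > 0) by nra. nra.
  - assert (T <> 0) by (intro; subst; lra). assert (x < 0) by nra. assert (y < 0) by nra. nra.
Qed.

Lemma comb x y t T : 0 <= t <= 1 -> x * T > 0 -> y * T > 0 -> (1 - t) * x + t * y <> 0.
Proof.
  intros Ht Hx Hy h. assert (((1-t)*x + t*y) * T = (1-t)*(x*T) + t*(y*T)) by ring.
  rewrite h in H. assert ((1-t)*(x*T) >= 0) by (apply Rle_ge, Rmult_le_pos; lra).
  assert (t*(y*T) >= 0) by (apply Rle_ge, Rmult_le_pos; lra).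
  destruct (Rle_lt_dec t 0).
  - assert (t = 0) by lra. subst. lra.
  - assert (t*(y*T) > 0) by (apply Rmult_lt_0_compat; lra). lra.
Qed.

Lemma quad_convex P1 P2 P3 P4 T :
  cross (z1 P1 P2 P3 P4) (z2 P1 P2 P3 P4) * T > 0 ->
  cross (z2 P1 P2 P3 P4) (z3 P1 P2 P3 P4) * T > 0 ->
  cross (z3 P1 P2 P3 P4) (z4 P1 P2 P3 P4) * T > 0 ->
  cross (z4 P1 P2 P3 P4) (z1 P1 P2 P3 P4) * T > 0 ->
  convex P1 P2 P3 P4.
Proof.
  intros H1 H2 H3 H4.
  split; [|split].
  - split; [|split; [|split]]; eapply gp; eassumption.
  - intros [_ [Hs|Hs]]; destruct Hs as (s & t & Hs & Ht & Heq).
    + destruct P1 as [x1 y1], P2 as [x2 y2], P3 as [x3 y3], P4 as [x4 y4].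
      unfold padd, pscale, psub in Heq; simpl in Heq. injection Heq; intros Ey Ex.
      unfold z1, z2, z3, z4, psub, cross in *; simpl in *.
      apply (comb _ _ t T Ht H1 H4).
      assert (Ex' : x1 + s*(x2-x1) - x3 - t*(x4-x3) = 0) by lra.
      assert (Ey' : y1 + s*(y2-y1) - y3 - t*(y4-y3) = 0) by lra.
      transitivity ((x2-x1)*(s*(y2-y1) - (y1 + s*(y2-y1) - y3 - t*(y4-y3))) - (y2-y1)*(s*(x2-x1) - (x1 + s*(x2-x1) - x3 - t*(x4-x3)))).
      * ring.
      * rewrite Ex', Ey'; ring.
    + destruct P1 as [x1 y1], P2 as [x2 y2], P3 as [x3 y3], P4 as [x4 y4].
      unfold padd, pscale, psub in Heq; simpl in Heq. injection Heq; intros Ey Ex.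
      unfold z1, z2, z3, z4, psub, cross in *; simpl in *.
      apply (comb _ _ t T Ht H2 H1).
      assert (Ex' : x2 + s*(x3-x2) - x4 - t*(x1-x4) = 0) by lra.
      assert (Ey' : y2 + s*(y3-y2) - y4 - t*(y1-y4) = 0) by lra.
      transitivity ((x3-x2)*(s*(y3-y2) - (y2 + s*(y3-y2) - y4 - t*(y1-y4))) - (y3-y2)*(s*(x3-x2) - (x2 + s*(x3-x2) - x4 - t*(x1-x4)))).
      * ring.
      * rewrite Ex', Ey'; ring.
  - unfold interior_angles_lt_pi.
    assert (HS : signed_area P1 P2 P3 P4 =
       (cross (z1 P1 P2 P3 P4) (z2 P1 P2 P3 P4) + cross (z3 P1 P2 P3 P4) (z4 P1 P2 P3 P4)) / 2).
    { destruct P1, P2, P3, P4; unfold signed_area, z1, z2, z3, z4, psub, cross; simpl; field. }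
    rewrite HS.
    set (X1 := cross (z1 P1 P2 P3 P4) (z2 P1 P2 P3 P4)) in *.
    set (X2 := cross (z2 P1 P2 P3 P4) (z3 P1 P2 P3 P4)) in *.
    set (X3 := cross (z3 P1 P2 P3 P4) (z4 P1 P2 P3 P4)) in *.
    set (X4 := cross (z4 P1 P2 P3 P4) (z1 P1 P2 P3 P4)) in *.
    pose proof (sgn_mul _ _ _ H1 H1). pose proof (sgn_mul _ _ _ H1 H3).
    pose proof (sgn_mul _ _ _ H2 H1). pose proof (sgn_mul _ _ _ H2 H3).
    pose proof (sgn_mul _ _ _ H3 H1). pose proof (sgn_mul _ _ _ H3 H3).
    pose proof (sgn_mul _ _ _ H4 H1). pose proof (sgn_mul _ _ _ H4 H3).
    repeat split; lra.
Qed.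

Lemma ss_pos P Q S : same_sign Q (2*P*Q) -> 2*P*Q*S > 0 -> P > 0 /\ Q*S > 0.
Proof.
  intros [[h1 h2]|[[h1 h2]|[h1 h2]]] h.
  - assert (P > 0) by nra. split; [lra|]. nra.
  - assert (P > 0) by nra. split; [lra|]. nra.
  - subst. lra.
Qed.

Lemma signs P1 P2 P3 P4 Q1 Q2 Q3 Q4 P1' P2' P3' P4' Q1' Q2' Q3' Q4' E S n2 n4 C13 :
  P1' = - P1 -> P2' = - P2 -> P3' = - P3 -> P4' = - P4 ->
  Q3 = E * Q1' -> - Q4 = E * Q2' -> Q1 = E * Q3' -> Q2 = - (E * Q4') ->
  n2 > 0 -> n4 > 0 -> n2 * C13 = Q1*P2 + P1*Q2 -> n4 * (- C13) = Q3*P4 + P3*Q4 ->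
  2*P1*Q1*S > 0 -> 2*P2*Q2*S > 0 -> 2*P3*Q3*S > 0 -> 2*P4*Q4*S > 0 ->
  same_sign Q1 (2*P1*Q1) -> same_sign Q2 (2*P2*Q2) -> same_sign Q3 (2*P3*Q3) ->
  2*P1'*Q1' * (-(E*S)) > 0 /\ 2*P2'*Q2' * (-(E*S)) > 0 /\
  2*P3'*Q3' * (-(E*S)) > 0 /\ 2*P4'*Q4' * (-(E*S)) > 0.
Proof.
  intros e1 e2 e3 e4 f1 f2 f3 f4 hn2 hn4 t1 t2 h1 h2 h3 h4 s1 s2 s3.
  destruct (ss_pos _ _ _ s1 h1) as [p1 q1].
  destruct (ss_pos _ _ _ s2 h2) as [p2 q2].
  destruct (ss_pos _ _ _ s3 h3) as [p3 q3].
  assert (p4 : P4 < 0).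
  { destruct (Rlt_le_dec P4 0) as [|hp]; [assumption|exfalso].
    assert (P4 <> 0) by (intro; subst; lra).
    assert (q4 : Q4 * S > 0) by nra.
    assert (n2 * C13 * S > 0) by (rewrite t1; nra).
    assert (n4 * (- C13) * S > 0) by (rewrite t2; nra).
    assert (C13 * S > 0) by nra.
    assert (- C13 * S > 0) by nra. lra. }
  assert (q4 : Q4 * S < 0) by nra.
  subst P1' P2' P3' P4'. split; [|split; [|split]].
  - replace (2 * - P1 * Q1' * - (E * S)) with (2*P1*(E*Q1')*S) by ring. rewrite <- f1. nra.
  - replace (2 * - P2 * Q2' * - (E * S)) with (2*P2*(E*Q2')*S) by ring. rewrite <- f2. nra.
  - replace (2 * - P3 * Q3' * - (E * S)) with (2*P3*(E*Q3')*S) by ring. rewrite <- ?f3, <- ?f4. nra.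
  - replace (2 * - P4 * Q4' * - (E * S)) with (-(2*P4*(- (E*Q4'))*S)) by ring. rewrite <- ?f3, <- ?f4. nra.
Qed.

Lemma pnorm_csq x y : pnorm (csq (x, y)) = x^2 + y^2.
Proof.
  unfold pnorm, csq; cbn [fst snd].
  replace ((x ^ 2 - y ^ 2) ^ 2 + (2 * x * y) ^ 2) with ((x^2+y^2)^2) by ring.
  apply sqrt_pow2. nra.
Qed.

Lemma ccsq x y : cross (csq x) (csq y) =
  2 * (fst x * fst y + snd x * snd y) * (fst x * snd y - snd x * fst y).
Proof. destruct x, y; unfold cross, csq; simpl; ring. Qed.

Lemma pos_norm x y p q s : 2 * (p*x + q*y) * (p*y - q*x) * s > 0 -> x*x + y*y > 0.
Proof.
  intros H. destruct (Req_dec x 0), (Req_dec y 0); subst; try nra.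

Qed.

Theorem corollary5p1 :
  forall A B C D : pt,
    convex A B C D ->
    perimeter A B C D = 2 ->
    forall u1 u2 u3 u4 : pt, sqrt_choice A B C D u1 u2 u3 u4 ->
    forall v1 v2 v3 v4 : pt, perp_basis u1 u2 u3 u4 v1 v2 v3 v4 ->
    forall K L M N : pt, dual_edges K L M N v1 v2 v3 v4 ->
    convex K L M N.
Proof.
  intros A B C D Hconv Hper u1 u2 u3 u4 Hsq v1 v2 v3 v4 Hpb K L M N Hde.
  destruct Hsq as (Hz1 & Hz2 & Hz3 & Hz4 & S1 & S2 & S3).
  destruct Hconv as (_ & _ & Hang). unfold interior_angles_lt_pi in Hang.
  set (S := signed_area A B C D) in Hang. cbv zeta in Hang.
  assert (Cl : fst (z1 A B C D) + fst (z2 A B C D) + fst (z3 A B C D) + fst (z4 A B C D) = 0 /\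
               snd (z1 A B C D) + snd (z2 A B C D) + snd (z3 A B C D) + snd (z4 A B C D) = 0).
  { destruct A, B, C, D; unfold z1, z2, z3, z4, psub; simpl; split; ring. }
  unfold perimeter in Hper.
  rewrite <- ?Hz1, <- ?Hz2, <- ?Hz3, <- ?Hz4 in Hang.
  rewrite <- ?Hz1, <- ?Hz2, <- ?Hz3, <- ?Hz4 in S1.
  rewrite <- ?Hz1, <- ?Hz2, <- ?Hz3, <- ?Hz4 in S2.
  rewrite <- ?Hz1, <- ?Hz2, <- ?Hz3, <- ?Hz4 in S3.
  rewrite <- ?Hz1, <- ?Hz2, <- ?Hz3, <- ?Hz4 in Cl.
  rewrite <- ?Hz1, <- ?Hz2, <- ?Hz3, <- ?Hz4 in Hper.
  clearbody S. clear Hz1 Hz2 Hz3 Hz4.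
  destruct u1 as [a1 b1], u2 as [a2 b2], u3 as [a3 b3], u4 as [a4 b4].
  destruct v1 as [c1 d1], v2 as [c2 d2], v3 as [c3 d3], v4 as [c4 d4].
  rewrite !pnorm_csq in Hper.
  unfold perp_basis in Hpb; simpl in Hpb.
  destruct Hpb as (Hcc & Hdd & Hcd & Hca & Hcb & Hda & Hdb).
  unfold csq in Cl; simpl in Cl. destruct Cl as [Cl1 Cl2].
  assert (Haa : dot4 a1 a2 a3 a4 a1 a2 a3 a4 = 1) by (unfold dot4; nra).
  assert (Hbb : dot4 b1 b2 b3 b4 b1 b2 b3 b4 = 1) by (unfold dot4; nra).
  assert (Hab : dot4 a1 a2 a3 a4 b1 b2 b3 b4 = 0) by (unfold dot4; nra).
  destruct (core a1 a2 a3 a4 b1 b2 b3 b4 c1 c2 c3 c4 d1 d2 d3 d4 Haa Hbb Hab Hcc Hdd Hcd Hca Hcb Hda Hdb)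
    as (E & HE & r1 & r2 & r3 & r4 & k1 & k2 & k3 & k4).
  destruct Hde as (e1 & e2 & e3 & e4).
  destruct Hang as (h1 & h2 & h3 & h4).
  rewrite ccsq in h1, h2, h3, h4, S1, S2, S3. cbn [fst snd] in h1, h2, h3, h4, S1, S2, S3.
  unfold cross in S1, S2, S3; cbn [fst snd] in S1, S2, S3.
  assert (n2 : a2*a2 + b2*b2 > 0) by (apply (pos_norm _ _ a1 b1 S); exact h1).
  assert (n4 : a4*a4 + b4*b4 > 0) by (apply (pos_norm _ _ a3 b3 S); exact h3).
  destruct (signs (a1*a2+b1*b2) (a2*a3+b2*b3) (a3*a4+b3*b4) (a4*a1+b4*b1)
                  (a1*b2-b1*a2) (a2*b3-b2*a3) (a3*b4-b3*a4) (a4*b1-b4*a1)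
                  (c1*c2+d1*d2) (c2*c3+d2*d3) (c3*c4+d3*d4) (c4*c1+d4*d1)
                  (c1*d2-d1*c2) (c2*d3-d2*c3) (c3*d4-d3*c4) (c4*d1-d4*c1)
                  E S (a2*a2+b2*b2) (a4*a4+b4*b4) (a1*b3-b1*a3)
                  ltac:(lra) ltac:(lra) ltac:(lra) ltac:(lra)
                  ltac:(lra) ltac:(lra) ltac:(lra) ltac:(lra)
                  n2 n4 ltac:(ring) ltac:(ring) h1 h2 h3 h4 S1 S2 S3)
    as (g1 & g2 & g3 & g4).
  apply (quad_convex K L M N (-(E*S))); unfold z1, z2, z3, z4;
    rewrite ?e1, ?e2, ?e3, ?e4, ccsq; cbn [fst snd]; assumption.
Qed.
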